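(* Let $n\geq 0$, let $\{b^n_j\}_{j=0}^n$ be a basis of the space of real univariate polynomials of degree at most $n$, and let $\mathbf{x}\in\mathbb{R}^{n+1}$ with $\mathbf{x}_0<\dots<\mathbf{x}_n$. Let $v$ and $w$ be polynomials of degree $n+1$ such that $v(\mathbf{x}_i)=0$, $v'(\mathbf{x}_i)\neq 0$ and $w(\mathbf{x}_i)\neq 0$ for each $0\le i\le n$. Then $V^n(\mathbf{x})$ is invertible and $$(V^n(\mathbf{x}))^{-1}=\mathrm{Bez}(v,w)\,(V^n(\mathbf{x}))^T\,\mathrm{diag}\!\left(\frac{1}{v'(\mathbf{x}_j)w(\mathbf{x}_j)}\right)_{j=0}^n.$$
   Context: The Vandermonde matrix $V^n(\mathbf{x})$ is the $(n+1)\times(n+1)$ matrix with entries $V^n_{ij}(\mathbf{x})=b^n_j(\mathbf{x}_i)$. For polynomials $v,w$ of degree at most $n+1$, the Bézout matrix $\mathrm{Bez}(v,w)$ is the unique $(n+1)\times(n+1)$ matrix satisfying $$\frac{v(s)w(t)-v(t)w(s)}{s-t}=\sum_{i,j=0}^n \mathrm{Bez}_{ij}(v,w)\,b^n_i(s)\,b^n_j(t).$$ *)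

(* Defs.v *)
From mathcomp Require Import all_boot all_order all_algebra.
From mathcomp Require Import reals.
Set Implicit Arguments. Unset Strict Implicit. Unset Printing Implicit Defensive.
Import Order.TTheory GRing.Theory Num.Theory.
Local Open Scope ring_scope.

Definition is_poly_basis (R : realType) (n : nat) (b : 'I_n.+1 -> {poly R}) : Prop :=
  (forall j, size (b j) <= n.+1)%N /\
  (forall p : {poly R}, (size p <= n.+1)%N ->
     exists c : 'I_n.+1 -> R,
       p = \sum_j c j *: b j /\
       forall c' : 'I_n.+1 -> R, p = \sum_j c' j *: b j -> forall j, c' j = c j).

Definition vandermonde (R : realType) (n : nat) (b : 'I_n.+1 -> {poly R})
  (x : 'I_n.+1 -> R) : 'M[R]_n.+1 :=
  \matrix_(i, j) (b j).[x i].

(* B is the Bezout matrix Bez(v,w) w.r.t. the basis b: the identity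
   (v(s)w(t)-v(t)w(s))/(s-t) = sum_{i,j} B_ij b_i(s) b_j(t)
   holds (as an identity of rational functions, i.e. for all s <> t). *)
Definition is_bezout (R : realType) (n : nat) (b : 'I_n.+1 -> {poly R})
  (v w : {poly R}) (B : 'M[R]_n.+1) : Prop :=
  forall s t : R, s != t ->
    (v.[s] * w.[t] - v.[t] * w.[s]) / (s - t)
    = \sum_i \sum_j B i j * (b i).[s] * (b j).[t].

(* Main.v *)
Require Import Defs.
From mathcomp Require Import all_boot all_order all_algebra.
From mathcomp Require Import reals.
From mathcomp Require Import ring.
Import Order.TTheory GRing.Theory Num.Theory.
Local Open Scope ring_scope.

Lemma poly_roots0 (R : realType) (p : {poly R}) (rs : seq R) :
  uniq rs -> all (root p) rs -> (size p <= size rs)%N -> p = 0.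
Proof.
move=> u a s; apply/eqP; apply/negPn/negP => p0.
by have := max_poly_roots p0 a u; rewrite ltnNge s.
Qed.

Lemma poly_eq0_except (R : realType) (Q : {poly R}) (t : R) :
  (forall s, s != t -> Q.[s] = 0) -> Q = 0.
Proof.
move=> H.
apply: (@poly_roots0 _ _ [seq t + (k.+1)%:R | k <- iota 0 (size Q)]).
- rewrite map_inj_uniq ?iota_uniq // => a c /addrI /eqP.
  by rewrite eqr_nat => /eqP [].
- apply/allP => s /mapP [k _ ->]; apply/rootP/H.
  by rewrite -subr_eq0 addrAC subrr add0r pnatr_eq0.
- by rewrite size_map size_iota.
Qed.

Theorem theorem2p1 (R : realType) (n : nat) (b : 'I_n.+1 -> {poly R})
  (x : 'I_n.+1 -> R) (v w : {poly R}) :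
  is_poly_basis b ->
  (forall i j : 'I_n.+1, (i < j)%N -> x i < x j) ->
  size v = n.+2 -> size w = n.+2 ->
  (forall i, v.[x i] = 0) ->
  (forall i, (v^`()).[x i] != 0) ->
  (forall i, w.[x i] != 0) ->
  vandermonde b x \in unitmx /\
  forall B : 'M[R]_n.+1, is_bezout b v w B ->
    invmx (vandermonde b x)
    = B *m (vandermonde b x)^T
        *m diag_mx (\row_j (1 / ((v^`()).[x j] * w.[x j]))).
Proof.
move=> [hb1 hb2] hx _ _ hv hv' hw.
have xinj : injective x.
  move=> i j e; case: (ltngtP i j) => [/hx|/hx|/val_inj //]; rewrite e ltxx //.
have vanish : forall p : {poly R}, (size p <= n.+1)%N -> (forall i, p.[x i] = 0) -> p = 0.
  move=> p sp pz; apply: (@poly_roots0 _ _ [seq x i | i <- enum 'I_n.+1]).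
  - by rewrite map_inj_uniq ?enum_uniq.
  - by apply/allP => s /mapP [i _ ->]; apply/rootP.
  - by rewrite size_map size_enum_ord.
have Vu : vandermonde b x \in unitmx.
  rewrite -unitmx_tr -row_free_unit -kermx_eq0.
  set K := kermx _; have KV : K *m (vandermonde b x)^T = 0 := mulmx_ker _.
  apply/eqP/matrixP => k j; rewrite [RHS]mxE.
  set p := \sum_j0 K k j0 *: b j0.
  have p0 : p = 0.
    apply: vanish.
      apply: (big_ind (fun q : {poly R} => (size q <= n.+1)%N)) => [|q1 q2 h1 h2|j0 _].
      + by rewrite size_poly0.
      + by rewrite (leq_trans (size_polyD _ _)) // geq_max h1 h2.
      + exact: leq_trans (size_scale_leq _ _) (hb1 j0).
    move=> i; have := congr1 (fun M : 'M[R]_n.+1 => M k i) KV; rewrite !mxE => <-.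
    rewrite /p horner_sum; apply: eq_bigr => j0 _; rewrite hornerZ !mxE //.
  have s0 : (size (0%R:{poly R}) <= n.+1)%N by rewrite size_poly0.
  have [c [_ cu]] := hb2 _ s0.
  rewrite (cu (K k) (esym p0)) -(cu (fun _ => 0 : R)) //.
  by rewrite big1 // => j0 _; rewrite scale0r.
split => // B hB.
set V := vandermonde b x.
set M := B *m V^T *m _.
suff VM : V *m M = 1%:M by rewrite -[RHS](mulKmx Vu) VM mulmx1.
have G : forall i k, (V *m B *m V^T) i k
    = \sum_j \sum_l B j l * (b j).[x i] * (b l).[x k].
  move=> i k; rewrite !mxE exchange_big; apply: eq_bigr => l _.
  rewrite !mxE big_distrl; apply: eq_bigr => j _; rewrite !mxE.
  by rewrite /= [(b j).[x i] * _]mulrC.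
apply/matrixP => i k.
rewrite /M !mulmxA mul_mx_diag mxE G !mxE.
have [<-|ik] := eqVneq i k.
  set t := x i.
  set P := \sum_j \sum_l (B j l * (b l).[t]) *: b j.
  have Ps : forall s, P.[s] = \sum_j \sum_l B j l * (b j).[s] * (b l).[t].
    move=> s; rewrite horner_sum; apply: eq_bigr => j _.
    rewrite horner_sum; apply: eq_bigr => l _; rewrite hornerZ; ring.
  have Q0 : P * ('X - t%:P) - w.[t] *: v = 0.
    apply: (@poly_eq0_except _ _ t) => s st.
    rewrite hornerD hornerN hornerZ hornerM hornerXsubC Ps -hB // hv.
    by rewrite divfK ?subr_eq0 // mul0r subr0 mulrC subrr.
  have := congr1 (fun q => (q^`()).[t]) Q0.
  rewrite derivB derivM derivXsubC derivZ deriv0 horner0 hornerD hornerN hornerZ.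
  rewrite hornerD hornerM hornerXsubC subrr mulr0 add0r mulr1 => /eqP.
  rewrite subr_eq0 => /eqP; rewrite -Ps => ->.
  by rewrite [w.[t] * _]mulrC div1r mulfV ?mulf_neq0 //; [exact: hv' | exact: hw].
have := hB (x i) (x k) _; rewrite !hv !mul0r subrr mul0r => <-.
  by rewrite mul0r.
by apply: contra ik => /eqP /xinj ->.
Qed.
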